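(* Let $c,h\in\mathbb{N}$ with $c>2(h+1)$, let $\ell=c2^h+1$, let $n\ge\ell$, and let $\underline{\eta}=(\eta_1<\dots<\eta_s)$ be positive integer thresholds whose largest threshold is $\eta_s=2^{h-1}+2$. Then there exists a $c\times n$ binary matrix $\mathbf{R}$, depending only on $n$, $h$, $c$ (hence only on $n,\ell$ and $\eta_s$, not on the other thresholds), such that for all $i,j\in\{0,\dots,n-\ell\}$ with $0<|i-j|<2\ell$, $\underline{\eta}(\mathbf{R}\mathbf{b}_i)\neq\underline{\eta}(\mathbf{R}\mathbf{b}_j)$. (Note $c\approx\ell/(2\eta_s)$.)
   Context: Items are indexed $0,\dots,n-1$; $\mathbf{b}_i\in\{0,1\}^n$ is the burst of length $\ell$ with head $i$ (coordinates $i,\dots,i+\ell-1$ equal to $1$). The SQGT outcome of a nonnegative integer $y$ is $\underline{\eta}(y)=|\{k:\eta_k\le y\}|$, applied entrywise to vectors. *)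

(* Defs.v *)
From mathcomp Require Import all_boot all_order all_algebra.
Set Implicit Arguments. Unset Strict Implicit. Unset Printing Implicit Defensive.

Definition burst (n : nat) (l i : nat) : 'I_n -> nat :=
  fun k => nat_of_bool ((i <= k) && (k < i + l)).
Arguments burst : clear implicits.

Definition mxvec_nat {c n : nat} (R : 'M[bool]_(c, n)) (v : 'I_n -> nat)
  : 'I_c -> nat :=
  fun r => \sum_(k < n) nat_of_bool (R r k) * v k.

Definition sqgt (eta : seq nat) (y : nat) : nat := count (fun e => e <= y) eta.

Definition sqgt_vec {c : nat} (eta : seq nat) (v : 'I_c -> nat) : {ffun 'I_c -> nat} :=
  [ffun r => sqgt eta (v r)].

Definition thresholds (eta : seq nat) (eta_s : nat) : Prop :=
  [/\ eta != [::], all (fun e => 0 < e) eta, sorted ltn eta & last 0 eta = eta_s].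

(* Main.v *)
Require Import Defs.
From mathcomp Require Import all_boot all_order all_algebra.
From mathcomp Require Import zify.
Set Implicit Arguments. Unset Strict Implicit. Unset Printing Implicit Defensive.

Definition gb (j k : nat) : bool := odd ((k + 2 ^ j) %/ 2 ^ j.+1).

Lemma divq_bounds m d : 0 < d -> m %/ d * d <= m /\ m < (m %/ d).+1 * d.
Proof. move=> d0; split; [exact: leq_divM | exact: ltn_ceil]. Qed.

Lemma gb_small j k : k < 4 * 2 ^ j -> gb j k = (2 ^ j <= k) && (k < 3 * 2 ^ j).
Proof.
rewrite /gb expnS; set X := 2 ^ j => hk.
have X0 : 0 < X by rewrite expn_gt0.
have [h1 h2] := @divq_bounds (k + X) (2 * X) (ltac:(lia)).
set q := (k + X) %/ (2 * X) in h1 h2 *.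
have : q < 3.
  rewrite ltnNge; apply/negP => h3.
  have : 3 * (2 * X) <= q * (2 * X) by rewrite leq_mul2r h3 orbT.
  lia.
case: q h1 h2 => [|[|[|q]]] h1 h2 _ //=; lia.
Qed.

Lemma gb_period j k a : gb j (k + a * (4 * 2 ^ j)) = gb j k.
Proof.
rewrite /gb expnS.
have -> : k + a * (4 * 2 ^ j) + 2 ^ j = (2 * a) * (2 * 2 ^ j) + (k + 2 ^ j) by lia.
by rewrite divnMDl ?muln_gt0 ?expn_gt0 // oddD oddM.
Qed.

Lemma gb0 j : gb j 0 = false.
Proof. rewrite gb_small ?expn_gt0; lia. Qed.

Lemma gb_xor j k : gb j k = odd (k %/ 2 ^ j) (+) odd (k %/ 2 ^ j.+1).
Proof.
rewrite /gb expnS; set X := 2 ^ j.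
have X0 : 0 < X by rewrite expn_gt0.
rewrite {1 2}(divn_eq k (2 * X)).
set q := k %/ (2 * X); set r := k %% (2 * X).
have hr : r < 2 * X by rewrite ltn_pmod // muln_gt0.
rewrite -addnA divnMDl ?muln_gt0 //.
have -> : q * (2 * X) + r = (2 * q) * X + r by lia.
rewrite divnMDl // oddD (oddD (2 * q)) oddM /=.
case: (leqP X r) => hXr.
- have -> : (r + X) %/ (2 * X) = 1.
    apply/eqP; rewrite eqn_leq; apply/andP; split.
    + by rewrite -ltnS ltn_divLR ?muln_gt0 //; lia.
    + by rewrite leq_divRL ?muln_gt0 //; lia.
  have -> : r %/ X = 1.
    apply/eqP; rewrite eqn_leq; apply/andP; split.
    + by rewrite -ltnS ltn_divLR //; lia.
    + by rewrite leq_divRL //; lia.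
  by rewrite addbC.
- rewrite (divn_small (m:=r + X)); last lia.
  rewrite divn_small //. by case: (odd q).
Qed.

Lemma gray_inj h k k' : k < 2 ^ h -> k' < 2 ^ h ->
  (forall j, j < h -> gb j k = gb j k') -> k = k'.
Proof.
move=> hk hk' hj.
suff H : forall t, t <= h -> k %/ 2 ^ (h - t) = k' %/ 2 ^ (h - t).
  by move: (H h (leqnn h)); rewrite subnn expn0 !divn1.
elim=> [_|t IH ht].
  by rewrite subn0 !divn_small.
have IH' := IH (ltnW ht).
set j := h - t.+1.
have hjS : h - t = j.+1 by rewrite /j; lia.
rewrite hjS in IH'.
have E : forall m, m %/ 2 ^ j = odd (m %/ 2 ^ j) + 2 * (m %/ 2 ^ j.+1).
  move=> m; have -> : m %/ 2 ^ j.+1 = (m %/ 2 ^ j) %/ 2 by rewrite expnS mulnC divnMA.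
  rewrite {1}(divn_eq (m %/ 2 ^ j) 2) modn2; lia.
have hg := hj j (ltac:(rewrite /j; lia)).
rewrite !gb_xor IH' in hg.
rewrite (E k) (E k') IH'.
have : odd (k %/ 2 ^ j) = odd (k' %/ 2 ^ j).
  by move: hg; case: (odd (k %/ 2 ^ j)); case: (odd (k' %/ 2 ^ j)); case: (odd _).
by move=> ->.
Qed.

Lemma sum_shift (F : nat -> nat) a k :
  \sum_(a <= j < a + k) F j = \sum_(0 <= r < k) F (a + r).
Proof.
rewrite -{1}[a]add0n big_addn addKn; apply: eq_big_nat => r _; by rewrite addnC.
Qed.

Lemma sum_nat0 m n (F : nat -> nat) :
  (forall i, m <= i < n -> F i = 0) -> \sum_(m <= i < n) F i = 0.
Proof. by move=> H; rewrite (eq_big_nat _ _ H) sum_nat_const_nat muln0. Qed.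

Lemma sum_eq1 n c0 : c0 < n -> \sum_(0 <= k < n) (k == c0 : nat) = 1.
Proof.
move=> hc.
rewrite (big_cat_nat (leq0n c0) (ltnW hc)) (big_ltn hc) eqxx.
rewrite !sum_nat0 //.
- by move=> i /andP [hi1 hi2]; have -> : (i == c0) = false by lia.
- by move=> i /andP [hi1 hi2]; have -> : (i == c0) = false by lia.
Qed.

Definition upg (j k : nat) : bool := ~~ gb j k && gb j k.+1.

Lemma up_small j k : k < 4 * 2 ^ j -> upg j k = (k.+1 == 2 ^ j).
Proof.
move=> hk; have X0 : 0 < 2 ^ j by rewrite expn_gt0.
case: (ltnP k.+1 (4 * 2 ^ j)) => hk1.
- rewrite /upg !gb_small //.
  case: (k.+1 =P 2 ^ j) => H.
  + apply/andP; split; [apply/negP; lia| apply/andP; lia].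
  + apply/negP => /andP [H1 /andP [H2 H3]]; move/negP: H1; lia.
- have E : k.+1 = 0 + 1 * (4 * 2 ^ j) by lia.
  rewrite /upg E gb_period gb0 andbF.
  symmetry; apply/negP; lia.
Qed.

Lemma sum_up_period j a : \sum_(0 <= k < a * (4 * 2 ^ j)) upg j k = a.
Proof.
have X0 : 0 < 2 ^ j by rewrite expn_gt0.
elim: a => [|a IH]; first by rewrite mul0n big_geq.
rewrite mulSnr (big_cat_nat (leq0n (a * (4 * 2 ^ j))) (leq_addr _ _)) IH.
rewrite sum_shift.
have [X1 hX1] : exists X1, 2 ^ j = X1.+1 by exists (2 ^ j).-1; rewrite prednK.
rewrite (@eq_big_nat _ _ _ _ _ _ (fun r => (r == X1 : nat))); last first.
  move=> r /andP [_ hr].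
  have -> : upg j (a * (4 * 2 ^ j) + r) = upg j r.
    have G : forall t, gb j (a * (4 * 2 ^ j) + t) = gb j t by move=> t; rewrite addnC gb_period.
    by rewrite /upg -addnS !G.
  rewrite up_small //.
  by rewrite hX1 eqSS.
rewrite sum_eq1; [exact: addn1 | lia].
Qed.

Lemma U_lo h j : j.+2 <= h -> \sum_(0 <= k < 2 ^ h) upg j k = 2 ^ (h - j.+2).
Proof.
move=> hj.
have -> : 2 ^ h = 2 ^ (h - j.+2) * (4 * 2 ^ j).
  rewrite -[in LHS](subnK hj) expnD !expnS; nia.
exact: sum_up_period.
Qed.

Lemma U_hi h : 0 < h -> \sum_(0 <= k < 2 ^ h) upg h.-1 k = 1.
Proof.
move=> h0.
have E : 2 ^ h = 2 * 2 ^ h.-1 by rewrite -expnS prednK.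
have X0 : 0 < 2 ^ h.-1 by rewrite expn_gt0.
have [X1 hX1] : exists X1, 2 ^ h.-1 = X1.+1 by exists (2 ^ h.-1).-1; rewrite prednK.
rewrite (@eq_big_nat _ _ _ _ _ _ (fun r => (r == X1 : nat))); last first.
  move=> r /andP [_ hr]; rewrite up_small; last lia.
  by rewrite hX1 eqSS.
by rewrite sum_eq1 //; lia.
Qed.

Lemma geo m : \sum_(0 <= j < m) 2 ^ (m - j.+1) + 1 = 2 ^ m.
Proof.
elim: m => [|m IH]; first by rewrite big_geq.
rewrite big_nat_recl // subn1 /=.
rewrite (@eq_big_nat _ _ _ _ _ _ (fun j => 2 ^ (m - j.+1))); last first.
  by move=> j _; rewrite subSS.
by rewrite -addnA IH expnS; lia.
Qed.

Lemma sumU h : 0 < h ->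
  \sum_(0 <= j < h) \sum_(0 <= k < 2 ^ h) upg j k = 2 ^ h.-1.
Proof.
case: h => [//|h _] /=.
rewrite big_nat_recr // U_hi //.
rewrite (@eq_big_nat _ _ _ _ _ _ (fun j => 2 ^ (h - j.+1))); last first.
  move=> j /andP [_ hj]; rewrite U_lo; last lia.
  by rewrite subSS.
exact: geo.
Qed.

Lemma up_last h j r : j < h -> r.+1 = 2 ^ h -> upg j r = false.
Proof.
move=> hj hr; rewrite /upg.
case: (ltnP j.+1 h) => hj1.
- have E : r.+1 = 0 + 2 ^ (h - j.+2) * (4 * 2 ^ j).
    rewrite hr -[in LHS](subnK hj1) expnD !expnS; nia.
  by rewrite E gb_period gb0 andbF.
- have hjh : h = j.+1 by lia.
  rewrite hjh expnS in hr.
  have X0 : 0 < 2 ^ j by rewrite expn_gt0.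
  rewrite gb_small; last lia.
  have -> : (2 ^ j <= r) && (r < 3 * 2 ^ j) by apply/andP; split; lia.
  done.
Qed.

Lemma divmodE a r d : r < d -> (a * d + r) %/ d = a /\ (a * d + r) %% d = r.
Proof.
move=> hr; have d0 : 0 < d by lia.
split; first by rewrite divnMDl // divn_small ?addn0.
by rewrite modnMDl modn_small.
Qed.

Definition downf (F : nat -> bool) (p : nat) : bool := F p && ~~ F p.+1.

Lemma transfer (F : nat -> bool) (sg : nat -> nat) a m :
  (forall p, sg p.+1 = sg p \/ sg p.+1 = (sg p).+1) ->
  \sum_(a <= p < a + m) downf (fun p => F (sg p)) p =
  \sum_(sg a <= t < sg (a + m)) downf F t.
Proof.
move=> hs.
have mono : forall m', sg a <= sg (a + m').
  elim=> [|m' IH]; first by rewrite addn0.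
  by rewrite addnS; case: (hs (a + m')) => ->; lia.
elim: m => [|m IH]; first by rewrite addn0 !big_geq.
rewrite addnS big_nat_recr ?leq_addr // IH.
case: (hs (a + m)) => E; rewrite [downf (fun p => _) _]/downf /= E.
- by rewrite andbN addn0.
- by rewrite big_nat_recr ?mono.
Qed.

Section Constr.
Variables c h : nat.
Hypotheses (h0 : 0 < h) (hc : 2 * (h + 1) < c).

Definition CP := c * 2 ^ h.
Definition LL := CP + 1.

Definition Nv (m k : nat) : bool :=
  if m == 0 then false else if m < c - h then true else ~~ gb (m - (c - h)) k.

Definition rho (t : nat) : bool :=
  odd (t %/ CP) (+) Nv ((t %% CP) %/ 2 ^ h) ((t %% CP) %% 2 ^ h).

Definition gw (u : nat) : nat := if 2 ^ h <= u then u - 1 else u.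

Definition lam (x i : nat) : nat := (i %/ LL) * CP + gw (i %% LL) + 2 * CP - x * 2 ^ h.

Definition Mv (x e k : nat) : bool :=
  if x <= e then Nv (e - x) k else ~~ Nv (e + c - x) k.

Definition spk (x u : nat) : bool := (x == h.+1) && (u == 2 ^ h).

Definition bb (x i : nat) : bool := rho (lam x i) (+) spk x (i %% LL).

Lemma P0 : 0 < 2 ^ h. Proof. by rewrite expn_gt0. Qed.
Lemma P2 : 2 <= 2 ^ h.
Proof. by rewrite -[2]expn1 leq_pexp2l. Qed.
Lemma CP0 : 2 ^ h <= CP.
Proof. rewrite /CP; have := P0; nia. Qed.

Lemma rho_lam q g x : g < CP -> x < c ->
  rho (q * CP + g + 2 * CP - x * 2 ^ h) = odd q (+) Mv x (g %/ 2 ^ h) (g %% 2 ^ h).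
Proof.
move=> hg hx; have Pp := P0.
set P := 2 ^ h in Pp hg *.
set e := g %/ P; set k := g %% P.
have hk : k < P by rewrite ltn_pmod.
have hge : g = e * P + k by rewrite /e /k -divn_eq.
have he : e < c by move: hg; rewrite hge /CP; nia.
rewrite /rho /Mv -/P; case: (leqP x e) => hxe.
- have E : q * CP + g + 2 * CP - x * P = q.+2 * CP + ((e - x) * P + k).
    rewrite hge /CP mulnBl; have : x * P <= e * P by rewrite leq_mul2r hxe orbT.
    nia.
  have hr : (e - x) * P + k < CP.
    have h1 : e - x < c by lia.
    have h2 : (e - x).+1 * P <= c * P by rewrite leq_mul2r h1 orbT.
    rewrite /CP; rewrite mulSn in h2; lia.
  rewrite E; have [-> ->] := divmodE q.+2 hr; have [-> ->] := divmodE (e - x) hk.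
  by rewrite /= negbK.
- have E : q * CP + g + 2 * CP - x * P = q.+1 * CP + ((e + c - x) * P + k).
    rewrite hge /CP mulnBl; have : x * P <= (e + c) * P by rewrite leq_mul2r; apply/orP; right; lia.
    nia.
  have hr : (e + c - x) * P + k < CP.
    have h1 : e + c - x < c by lia.
    have h2 : (e + c - x).+1 * P <= c * P by rewrite leq_mul2r h1 orbT.
    rewrite /CP; rewrite mulSn in h2; lia.
  rewrite E; have [-> ->] := divmodE q.+1 hr; have [-> ->] := divmodE (e + c - x) hk.
  by rewrite /= addNb addbN.
Qed.

Lemma gw_lt u : u < LL -> gw u < CP.
Proof. rewrite /gw /LL => hu; have := CP0; case: ifP; lia. Qed.

Lemma bb_dec x q u : x < c -> u < LL ->
  bb x (q * LL + u) = odd q (+) (Mv x (gw u %/ 2 ^ h) (gw u %% 2 ^ h) (+) spk x u).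
Proof.
move=> hx hu; rewrite /bb /lam; have [-> ->] := divmodE q hu.
by rewrite rho_lam ?gw_lt // addbA.
Qed.

Lemma bb_antiper x i : x < c -> bb x (i + LL) = ~~ bb x i.
Proof.
move=> hx; have L0 : 0 < LL by rewrite /LL addn1.
rewrite {1 2}(divn_eq i LL).
have hu : i %% LL < LL by rewrite ltn_pmod.
have -> : i %/ LL * LL + i %% LL + LL = (i %/ LL).+1 * LL + i %% LL by rewrite mulSn; lia.
by rewrite !bb_dec //= addNb.
Qed.

Lemma lam_step x i : x < c -> lam x i.+1 = lam x i \/ lam x i.+1 = (lam x i).+1.
Proof.
move=> hx; have L0 : 0 < LL by rewrite /LL addn1.
have hC := CP0.
have hxP : x * 2 ^ h <= CP by rewrite /CP leq_mul2r; apply/orP; right; lia.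
have [q [u [hu ->]]] : exists q u, u < LL /\ i = q * LL + u.
  by exists (i %/ LL), (i %% LL); rewrite ltn_pmod // -divn_eq.
rewrite /lam.
case: (ltnP u.+1 LL) => hu1.
- rewrite -addnS; have [-> ->] := divmodE q hu1; have [-> ->] := divmodE q hu.
  rewrite /gw; case: ifP; case: ifP; lia.
- have -> : (q * LL + u).+1 = q.+1 * LL + 0 by rewrite mulSn; lia.
  have [-> ->] := divmodE q.+1 L0; have [-> ->] := divmodE q hu.
  rewrite /gw; case: ifP; case: ifP; rewrite /LL in hu hu1 *; rewrite mulSn; nia.
Qed.



Lemma sum_shift' (F : nat -> nat) a b : a <= b ->
  \sum_(a <= j < b) F j = \sum_(0 <= r < b - a) F (a + r).
Proof. move=> hab; have := sum_shift F a (b - a); by rewrite subnKC. Qed.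

Lemma rho_small t : t < CP -> rho t = Nv (t %/ 2 ^ h) (t %% 2 ^ h).
Proof. by move=> ht; rewrite /rho divn_small // modn_small. Qed.

Lemma CPpos : 0 < CP.
Proof. have := CP0; have := P0; lia. Qed.

Lemma rho_antiper t : rho (t + CP) = ~~ rho t.
Proof.
have C0 := CPpos.
have [q [r [hr ->]]] : exists q r, r < CP /\ t = q * CP + r.
  by exists (t %/ CP), (t %% CP); rewrite ltn_pmod // -divn_eq.
have -> : q * CP + r + CP = q.+1 * CP + r by rewrite mulSn; lia.
rewrite /rho; have [-> ->] := divmodE q hr; have [-> ->] := divmodE q.+1 hr.
by rewrite /= addNb.
Qed.

Lemma rho_CP : rho CP = true.
Proof.
have C0 := CPpos.
by rewrite /rho divnn C0 modnn div0n mod0n /Nv.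
Qed.

Lemma rho0 : rho 0 = false.
Proof. by rewrite /rho div0n mod0n div0n mod0n /Nv. Qed.

Lemma N0 m : 0 < m -> Nv m 0 = true.
Proof. move=> hm; rewrite /Nv; case: eqP => [|_]; first lia. by case: ifP; rewrite // gb0. Qed.

Lemma N_mid m k : 0 < m -> m < c - h -> Nv m k = true.
Proof. move=> hm hm'; rewrite /Nv; case: eqP => [|_]; first lia. by rewrite hm'. Qed.

Lemma N_hi m k : c - h <= m -> Nv m k = ~~ gb (m - (c - h)) k.
Proof. move=> hm; rewrite /Nv; case: eqP => [|_]; first lia. by rewrite ltnNge hm. Qed.

Lemma down_block m r : m < c -> r < 2 ^ h ->
  downf rho (m * 2 ^ h + r) = if m < c - h then false else upg (m - (c - h)) r.
Proof.
move=> hm hr; have Pp := P0.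
have hmr : m * 2 ^ h + r < CP.
  have h2 : m.+1 * 2 ^ h <= c * 2 ^ h by rewrite leq_mul2r hm orbT.
  rewrite /CP; rewrite mulSn in h2; lia.
have Hnext : rho (m * 2 ^ h + r).+1 =
   if r.+1 < 2 ^ h then Nv m r.+1 else true.
  case: ltnP => hr1.
  - rewrite -addnS rho_small; last first.
      have h2 : m.+1 * 2 ^ h <= c * 2 ^ h by rewrite leq_mul2r hm orbT.
      rewrite /CP; rewrite mulSn in h2; lia.
    by have [-> ->] := divmodE m hr1.
  - have E : (m * 2 ^ h + r).+1 = m.+1 * 2 ^ h + 0 by rewrite mulSn; lia.
    rewrite E; case: (ltnP m.+1 c) => hm1.
    + rewrite rho_small; last first.
        have h2 : m.+2 * 2 ^ h <= c * 2 ^ h by rewrite leq_mul2r hm1 orbT.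
        rewrite /CP; rewrite mulSn in h2; lia.
      by have [-> ->] := divmodE m.+1 Pp; rewrite N0.
    + have -> : m.+1 * 2 ^ h + 0 = CP by rewrite /CP addn0; congr (_ * _); lia.
      exact: rho_CP.
rewrite /downf Hnext rho_small //; have [-> ->] := divmodE m hr.
case: (posnP m) => [->|hm0].
  have -> : (0 < c - h) = true by lia.
  by rewrite /Nv.
case: (ltnP m (c - h)) => hmc.
  by rewrite N_mid //; case: ifP => // _; rewrite N_mid.
rewrite N_hi //.
case: ltnP => hr1.
  by rewrite N_hi // negbK.
rewrite /= andbF (@up_last h) //; lia.
Qed.

Lemma Drho0 : \sum_(0 <= v < CP) downf rho v = 2 ^ h.-1.
Proof.
have Pp := P0.
rewrite /CP big_nat_mul.
rewrite (@eq_big_nat _ _ _ _ _ _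
   (fun m => if m < c - h then 0 else \sum_(0 <= r < 2 ^ h) upg (m - (c - h)) r)); last first.
  move=> m /andP [_ hm].
  rewrite mulSnr sum_shift.
  rewrite (@eq_big_nat _ _ _ _ _ _ (fun r => nat_of_bool (if m < c - h then false else upg (m - (c - h)) r))); last first.
    by move=> r /andP [_ hr]; rewrite down_block.
  case: ifP => _; last done.
  by rewrite sum_nat0.
have hch : c - h <= c by lia.
rewrite (big_cat_nat (leq0n (c - h)) hch) sum_nat0; last first.
  by move=> i /andP [_ hi]; rewrite hi.
rewrite /= sum_shift' // (_ : c - (c - h) = h); last lia.
rewrite (@eq_big_nat _ _ _ _ _ _ (fun j => \sum_(0 <= r < 2 ^ h) upg j r)); last first.
  move=> j _; rewrite ifF; last lia.
  by rewrite (_ : c - h + j - (c - h) = j) //; lia.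
exact: sumU.
Qed.

Definition Drho (t : nat) := \sum_(t <= v < t + CP) downf rho v.

Lemma Drho_step t : Drho t.+1 + rho t = Drho t + rho t.+1.
Proof.
have C0 := CPpos.
have ht : t < t + CP by lia.
rewrite /Drho (big_ltn ht) addSn big_nat_recr /=; last lia.
have E : downf rho (t + CP) = ~~ rho t && rho t.+1.
  by rewrite /downf rho_antiper -addSn rho_antiper negbK.
rewrite E {2}/downf.
case: (rho t); case: (rho t.+1) => /=; lia.
Qed.

Lemma Drho_all t : Drho t = 2 ^ h.-1 + rho t.
Proof.
elim: t => [|t IH].
  by rewrite /Drho add0n Drho0 rho0 addn0.
have := Drho_step t; rewrite IH; lia.
Qed.



Definition phi (x : nat) : nat := if x < c - 1 then x.+1 * 2 ^ h + 1 else 0.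
Definition fill (x p : nat) : bool := (x != h.+1) && (p %% LL == phi x).
Definition ss (x p : nat) : bool := downf (bb x) p || fill x p.
Definition fsum (x i : nat) : nat := \sum_(i <= p < i + LL) ss x p.

Lemma phi_lt x : x < c -> (phi x).+1 < LL.
Proof.
move=> hx; have := P2; rewrite /phi /LL /CP; case: ifP => hx1 hP; last nia.
have : x.+2 * 2 ^ h <= c * 2 ^ h by rewrite leq_mul2r; apply/orP; right; lia.
rewrite mulSn; lia.
Qed.

Lemma bb_val x u : x < c -> u < LL ->
  bb x u = Mv x (gw u %/ 2 ^ h) (gw u %% 2 ^ h) (+) spk x u.
Proof. by move=> hx hu; have := bb_dec 0 hx hu; rewrite mul0n add0n. Qed.

Lemma rho_lam_val x u : x < c -> u < LL ->
  rho (lam x u) = Mv x (gw u %/ 2 ^ h) (gw u %% 2 ^ h).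
Proof.
move=> hx hu; rewrite /lam; have := divmodE 0 hu; rewrite mul0n add0n => [[-> ->]].
by rewrite rho_lam ?gw_lt.
Qed.

Lemma divP k : k < 2 ^ h -> k %/ 2 ^ h = 0 /\ k %% 2 ^ h = k.
Proof. by move=> hk; have := divmodE 0 hk; rewrite mul0n add0n. Qed.

Lemma fill_nodown x p : x < c -> fill x p -> bb x p = bb x p.+1.
Proof.
move=> hx /andP [hxh /eqP hp].
have hP := P2.
have L0 : 0 < LL by rewrite /LL addn1.
have hphi := phi_lt hx.
rewrite (divn_eq p LL) hp -addnS !bb_dec //; last lia.
have -> : spk x (phi x) = false by rewrite /spk (negbTE hxh).
have -> : spk x (phi x).+1 = false by rewrite /spk (negbTE hxh).
congr (_ (+) _); rewrite !addbF.
move: hphi; rewrite /phi; case: ifP => hx1 hphi.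
- have E1 : gw (x.+1 * 2 ^ h + 1) = x.+1 * 2 ^ h + 0.
    rewrite /gw ifT; [lia | rewrite mulSn; lia].
  have E2 : gw (x.+1 * 2 ^ h + 1).+1 = x.+1 * 2 ^ h + 1.
    rewrite /gw ifT; [lia | rewrite mulSn; lia].
  rewrite E1 E2; have [-> ->] := divmodE x.+1 P0; have [-> ->] := divmodE x.+1 hP.
  rewrite /Mv !ifT //; rewrite !N_mid //; lia.
- have E1 : gw 0 = 0 by rewrite /gw ifF //; have := P0; lia.
  have E2 : gw 1 = 1 by rewrite /gw ifF //; lia.
  rewrite E1 E2; have [-> ->] := divP P0; have [-> ->] := divP hP.
  rewrite /Mv !ifF; try lia.
  by rewrite !N_mid //; lia.
Qed.

Lemma ss_nat x p : x < c -> nat_of_bool (ss x p) = downf (bb x) p + fill x p.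
Proof.
move=> hx; rewrite /ss; case hf: (fill x p); last by rewrite orbF addn0.
by rewrite /downf (fill_nodown hx hf) andbN.
Qed.

Lemma fill_per x p : fill x (p + LL) = fill x p.
Proof. by rewrite /fill modnDr. Qed.

Lemma fsum_step x i : x < c -> fsum x i.+1 + bb x i = fsum x i + bb x i.+1.
Proof.
move=> hx; have L0 : 0 < LL by rewrite /LL addn1.
have ht : i < i + LL by lia.
rewrite /fsum (big_ltn ht) addSn big_nat_recr /=; last lia.
rewrite !ss_nat // fill_per.
have E : downf (bb x) (i + LL) = ~~ bb x i && bb x i.+1.
  by rewrite /downf bb_antiper // -addSn bb_antiper // negbK.
rewrite E /downf.
case: (bb x i); case: (bb x i.+1) => /=; lia.
Qed.


Lemma bb0 x : x < c -> bb x 0 = false.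
Proof.
move=> hx; have L0 : 0 < LL by rewrite /LL addn1.
rewrite bb_val //.
have E1 : gw 0 = 0 by rewrite /gw ifF //; have := P0; lia.
rewrite E1 div0n mod0n.
have -> : spk x 0 = false by rewrite /spk; have := P0; case: (x == h.+1) => //=; lia.
rewrite addbF /Mv; case: ifP => hx0.
  by rewrite (_ : x = 0) ?subnn //; lia.
rewrite add0n N0 //; lia.
Qed.

Lemma fsum_all x i : x < c -> fsum x i = fsum x 0 + bb x i.
Proof.
move=> hx; elim: i => [|i IH]; first by rewrite (bb0 hx) addn0.
have := fsum_step i hx; rewrite IH; lia.
Qed.



Lemma lamL x : x < c -> lam x LL = lam x 0 + CP.
Proof.
move=> hx; have L0 : 0 < LL by rewrite /LL addn1.
have hxP : x * 2 ^ h <= CP by rewrite /CP leq_mul2r; apply/orP; right; lia.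
rewrite /lam divnn L0 modnn div0n mod0n /gw ifF; last by have := P0; lia.
lia.
Qed.

Lemma down_sum_reg x : x < c ->
  \sum_(0 <= p < LL) downf (fun p => rho (lam x p)) p = 2 ^ h.-1.
Proof.
move=> hx; have L0 : 0 < LL by rewrite /LL addn1.
have T := @transfer rho (lam x) 0 LL (fun p => lam_step p hx).
rewrite !add0n in T; rewrite T lamL //.
have -> : \sum_(lam x 0 <= t < lam x 0 + CP) downf rho t = Drho (lam x 0) by [].
rewrite Drho_all.
have : bb x 0 = false by apply: bb0.
rewrite /bb mod0n.
have -> : spk x 0 = false by rewrite /spk; have := P0; case: (x == h.+1) => //=; lia.
by rewrite addbF => ->; rewrite addn0.
Qed.

Lemma spike_down x p : x = h.+1 -> x < c -> p < LL ->
  nat_of_bool (downf (bb x) p) = downf (fun p => rho (lam x p)) p + (p == 2 ^ h).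
Proof.
move=> hxh hx hp.
have L0 : 0 < LL by rewrite /LL addn1.
have hPL : 2 ^ h < LL by have := CP0; rewrite /LL; lia.
have hb : forall u, u < LL -> bb x u = rho (lam x u) (+) (u == 2 ^ h).
  by move=> u hu; rewrite /bb modn_small // /spk hxh eqxx.
have hbS : bb x p.+1 = rho (lam x p.+1) (+) (p.+1 == 2 ^ h).
  case: (ltnP p.+1 LL) => hp1; first exact: hb.
  have -> : p.+1 = LL by lia.
  rewrite /bb modnn /spk.
  have -> : (0 == 2 ^ h) = false by have := P0; lia.
  have -> : (LL == 2 ^ h) = false by lia.
  by rewrite !andbF.
have [P1 hP1] : exists P1, 2 ^ h = P1.+1 by exists (2 ^ h).-1; rewrite prednK // P0.
have hP2 := P2.
have Mvf : forall k, Mv x 0 k = false.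
  move=> k; rewrite /Mv ifF; last lia.
  by rewrite N_mid //; lia.
have hCP2 : 2 * 2 ^ h <= CP by rewrite /CP leq_mul2r; apply/orP; right; lia.
have B1 : rho (lam x P1) = false.
  rewrite rho_lam_val //; last lia.
  rewrite /gw ifF; last lia.
  by have [-> ->] := divP (ltac:(lia) : P1 < 2 ^ h).
have B2 : rho (lam x P1.+1) = false.
  rewrite rho_lam_val //; last lia.
  rewrite /gw ifT; last lia.
  by rewrite subn1 /=; have [-> ->] := divP (ltac:(lia) : P1 < 2 ^ h).
have B3 : rho (lam x P1.+2) = false.
  rewrite rho_lam_val //; last by rewrite /LL; lia.
  rewrite /gw ifT; last lia.
  rewrite subn1 /= -hP1 divnn P0 modnn.
  rewrite /Mv ifF; last lia.
  by rewrite N0 //; lia.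
rewrite /downf (hb p hp) hbS.
case: (eqVneq p P1) => [->|hp1].
  by rewrite B1 B2 hP1 eqxx (_ : (P1 == P1.+1) = false) //; lia.
case: (eqVneq p P1.+1) => [->|hp2].
  by rewrite B2 B3 hP1 eqxx (_ : (P1.+2 == P1.+1) = false) //; lia.
have e1 : (p == P1.+1) = false by apply/negP => /eqP E; rewrite E eqxx in hp2.
have e2 : (p.+1 == P1.+1) = false by rewrite eqSS; apply/negP => /eqP E; rewrite E eqxx in hp1.
by rewrite hP1 e1 e2 !addbF addn0.
Qed.

Lemma fsum0 x : x < c -> fsum x 0 = 2 ^ h.-1 + 1.
Proof.
move=> hx; have L0 : 0 < LL by rewrite /LL addn1.
rewrite /fsum add0n.
rewrite (@eq_big_nat _ _ _ _ _ _ (fun p => downf (bb x) p + fill x p)); last first.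
  by move=> p _; rewrite ss_nat.
rewrite big_split /=.
case: (eqVneq x h.+1) => hxh.
- rewrite (@sum_nat0 _ _ (fun p => nat_of_bool (fill x p))); last first.
    by move=> p _; rewrite /fill hxh eqxx.
  rewrite (@eq_big_nat _ _ _ _ _ _ (fun p => downf (fun p => rho (lam x p)) p + (p == 2 ^ h))); last first.
    by move=> p /andP [_ hp]; rewrite spike_down.
  rewrite big_split /= down_sum_reg // sum_eq1; first by rewrite addn0.
  by have := CP0; rewrite /LL; lia.
- rewrite (@eq_big_nat _ _ _ _ _ (fun p => nat_of_bool (fill x p)) (fun p => (p == phi x : nat))); last first.
    by move=> p /andP [_ hp]; rewrite /fill hxh modn_small.
  rewrite sum_eq1; last by have := phi_lt hx; lia.
  rewrite (@eq_big_nat _ _ _ _ _ _ (fun p => nat_of_bool (downf (fun p => rho (lam x p)) p))); last first.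
    by move=> p _; rewrite /downf /bb /spk (negbTE hxh) !addbF.
  by rewrite down_sum_reg.
Qed.

Lemma fsum_val x i : x < c -> fsum x i = 2 ^ h.-1 + 1 + bb x i.
Proof. by move=> hx; rewrite fsum_all // fsum0. Qed.



Lemma Mv_extract e j : e < c -> j < h ->
  exists x b0, x < c /\ forall k, Mv x e k = b0 (+) gb j k.
Proof.
move=> he hj; case: (leqP (c - h + j) e) => hej.
- exists (e - (c - h) - j), true; split; first lia.
  move=> k; rewrite /Mv ifT; last lia.
  rewrite N_hi; last lia.
  by rewrite (_ : e - (e - (c - h) - j) - (c - h) = j) //; lia.
- exists (e + h - j), false; split; first lia.
  move=> k; rewrite /Mv ifF; last lia.
  rewrite N_hi; last lia.
  by rewrite negbK (_ : e + c - (e + h - j) - (c - h) = j) //; lia.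
Qed.

Lemma D1ne e e' k k' : e < e' -> e' < c -> exists x, x < c /\ Mv x e k != Mv x e' k'.
Proof.
move=> hee he'; case: (ltnP (e' - e) (c - h)) => hd.
- exists e; split; first lia.
  rewrite /Mv !ifT; try lia.
  by rewrite subnn {1}/Nv N_mid //; lia.
- exists e'.-1; split; first lia.
  rewrite /Mv ifF; last lia.
  rewrite ifT; last lia.
  rewrite (_ : e' - e'.-1 = 1); last lia.
  by rewrite !N_mid //; lia.
Qed.

Lemma D1 e e' k k' : e < c -> e' < c -> k < 2 ^ h -> k' < 2 ^ h ->
  (forall x, x < c -> Mv x e k = Mv x e' k') -> e = e' /\ k = k'.
Proof.
move=> he he' hk hk' H.
have ee : e = e'.
  case: (ltngtP e e') => // hlt.
  - have [x [hx hne]] := D1ne k k' hlt he'.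
    by rewrite H // eqxx in hne.
  - have [x [hx hne]] := D1ne k' k hlt he.
    by rewrite H // eqxx in hne.
split => //; subst e'.
apply: (@gray_inj h) => // j hj.
have [x [b0 [hx Hx]]] := Mv_extract he hj.
have := H x hx; rewrite !Hx => /(congr1 (addb b0)).
by rewrite !addKb.
Qed.

Lemma D2lt e e' k k' : e < e' -> e' < c -> exists x, x < c /\ Mv x e k == Mv x e' k'.
Proof.
move=> hee he'.
case: (leqP (e + h + 1) e') => ha.
  exists e'; split => //.
  rewrite /Mv ifF; last lia.
  rewrite ifT // subnn N_mid; [done|lia|lia].
case: (leqP (e' + h + 2) c) => hb.
  exists c.-1; split; first lia.
  rewrite /Mv !ifF; try lia.
  rewrite (_ : e + c - c.-1 = e.+1); last lia.
  rewrite (_ : e' + c - c.-1 = e'.+1); last lia.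
  by rewrite !N_mid //; lia.
exists e.-1; split; first lia.
rewrite /Mv !ifT; try lia.
rewrite (_ : e - e.-1 = 1); last lia.
by rewrite !N_mid //; lia.
Qed.

Lemma D2 e e' k k' : e < c -> e' < c -> exists x, x < c /\ Mv x e k == Mv x e' k'.
Proof.
move=> he he'; case: (ltngtP e e') => hlt.
- exact: D2lt.
- have [x [hx E]] := D2lt k' k hlt he.
  by exists x; rewrite eq_sym.
- subst e'; exists e; split => //.
  by rewrite /Mv leqnn subnn /Nv.
Qed.

Lemma gb_last j P1 : j < h -> 2 ^ h = P1.+1 -> gb j P1 = (j == h.-1).
Proof.
move=> hj hP.
have X0 : 0 < 2 ^ j by rewrite expn_gt0.
case: (ltnP j.+1 h) => hj1.
- have [a ha] : exists a, 2 ^ (h - j.+2) = a.+1.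
    by exists (2 ^ (h - j.+2)).-1; rewrite prednK // expn_gt0.
  have E : P1 = (4 * 2 ^ j - 1) + a * (4 * 2 ^ j).
    have : 2 ^ h = 2 ^ (h - j.+2) * (4 * 2 ^ j).
      by rewrite -[in LHS](subnK hj1) expnD !expnS; nia.
    rewrite ha hP mulSn; lia.
  rewrite E gb_period gb_small; last lia.
  have -> : (j == h.-1) = false by lia.
  by apply/negP => /andP [_]; lia.
- have hjh : h = j.+1 by lia.
  rewrite hjh expnS in hP.
  rewrite gb_small; last lia.
  rewrite hjh /= eqxx; apply/andP; split; lia.
Qed.

Lemma zv_val x P1 : x < c -> 2 ^ h = P1.+1 -> Mv x 0 P1 = (x == 1).
Proof.
move=> hx hP; rewrite /Mv.
case: (posnP x) => [->|hx0]; first by rewrite /Nv.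
rewrite ifF; last lia.
rewrite add0n.
case: (ltnP h x) => hxh.
  rewrite N_mid; [|lia|lia].
  by have -> : (x == 1) = false by lia.
rewrite N_hi; last lia.
rewrite negbK gb_last //; last lia.
apply/eqP/eqP; lia.
Qed.



Lemma Mv_le x e k : x <= e -> Mv x e k = Nv (e - x) k.
Proof. by move=> hx; rewrite /Mv hx. Qed.
Lemma Mv_gt x e k : e < x -> Mv x e k = ~~ Nv (e + c - x) k.
Proof. by move=> hx; rewrite /Mv leqNgt hx. Qed.

Lemma D3a e k : e < c -> exists x, x < c /\ ((x == 1) (+) (x == h.+1)) != Mv x e k.
Proof.
move=> he.
case: (eqVneq e 0) => [->|he0].
  exists h.+1; split; first lia.
  rewrite Mv_gt // add0n N_mid; [|lia|lia].
  have -> : (h.+1 == 1) = false by lia.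
  by rewrite eqxx.
case: (eqVneq e 1) => [->|he1].
  exists 1; split; first lia.
  rewrite /Mv leqnn subnn /Nv eqxx.
  have -> : (1 == h.+1) = false by lia.
  done.
case: (eqVneq e h.+1) => [->|heh].
  exists h.+1; split; first lia.
  rewrite /Mv leqnn subnn /Nv eqxx.
  have -> : (h.+1 == 1) = false by lia.
  done.
case: (ltnP e (c - h)) => hec.
  exists 0; split; first lia.
  rewrite Mv_le // subn0 N_mid //; lia.
exists e.-1; split; first lia.
rewrite Mv_le; last lia.
rewrite (_ : e - e.-1 = 1); last lia.
rewrite N_mid; [|lia|lia].
have -> : (e.-1 == 1) = false by lia.
  have -> : (e.-1 == h.+1) = false by lia.
  done.
Qed.

Lemma D3b e k : e < c -> exists x, x < c /\ ((x == 1) (+) (x == h.+1)) == Mv x e k.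
Proof.
move=> he.
case: (eqVneq e 1) => [->|he1].
  exists h.+2; split; first lia.
  rewrite Mv_gt //.
  rewrite (_ : 1 + c - h.+2 = c - h - 1); last lia.
  rewrite N_mid; [|lia|lia].
  have -> : (h.+2 == 1) = false by lia.
  have -> : (h.+2 == h.+1) = false by lia.
  done.
case: (eqVneq e h.+1) => [->|heh].
  exists c.-1; split; first lia.
  rewrite Mv_gt; last lia.
  rewrite (_ : h.+1 + c - c.-1 = h.+2); last lia.
  rewrite N_mid; [|lia|lia].
  have -> : (c.-1 == 1) = false by lia.
  have -> : (c.-1 == h.+1) = false by lia.
  done.
exists e; split => //.
rewrite /Mv leqnn subnn /Nv.
by rewrite (negbTE he1) (negbTE heh).
Qed.

Definition Vf (x u : nat) : bool := Mv x (gw u %/ 2 ^ h) (gw u %% 2 ^ h) (+) spk x u.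

Lemma ek_bounds u : u < LL -> gw u %/ 2 ^ h < c /\ gw u %% 2 ^ h < 2 ^ h.
Proof.
move=> hu; have Pp := P0; split; last by rewrite ltn_pmod.
by rewrite ltn_divLR //; have := gw_lt hu; rewrite /CP.
Qed.

Lemma gw_inj u u' : u != 2 ^ h -> u' != 2 ^ h -> gw u = gw u' -> u = u'.
Proof. rewrite /gw => h1 h2; case: ifP; case: ifP; lia. Qed.

Lemma V_reg x u : u != 2 ^ h -> Vf x u = Mv x (gw u %/ 2 ^ h) (gw u %% 2 ^ h).
Proof. by move=> hu; rewrite /Vf /spk (negbTE hu) andbF addbF. Qed.

Lemma V_P x P1 : x < c -> 2 ^ h = P1.+1 -> Vf x (2 ^ h) = (x == 1) (+) (x == h.+1).
Proof.
move=> hx hP; rewrite /Vf /spk eqxx andbT /gw ifT // (_ : 2 ^ h - 1 = P1); last lia.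
have [-> ->] := divP (ltac:(lia) : P1 < 2 ^ h).
by rewrite zv_val.
Qed.

Lemma V_half hf u : u < LL -> u != 2 ^ h ->
  ~ (forall x, x < c -> hf (+) Vf x (2 ^ h) = hf (+) Vf x u) /\
  ~ (forall x, x < c -> hf (+) Vf x (2 ^ h) = ~~ hf (+) Vf x u).
Proof.
move=> hu hneq.
have [P1 hP] : exists P1, 2 ^ h = P1.+1 by exists (2 ^ h).-1; rewrite prednK // P0.
have [he hk] := ek_bounds hu.
split => H.
- have [x [hx hne]] := D3a (gw u %% 2 ^ h) he.
  have := H x hx; rewrite (V_P hx hP) V_reg // => /(congr1 (addb hf)); rewrite !addKb => E.
  by rewrite E eqxx in hne.
- have [x [hx heq]] := D3b (gw u %% 2 ^ h) he.
  have := H x hx; rewrite (V_P hx hP) V_reg // (eqP heq) addNb.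
  by case: (hf (+) _).
Qed.

Lemma V_distinct hf hf' u u' : u < LL -> u' < LL -> (hf != hf') || (u != u') ->
  ~ (forall x, x < c -> hf (+) Vf x u = hf' (+) Vf x u').
Proof.
move=> hu hu' hd H.
case: (eqVneq u (2 ^ h)) => hP; case: (eqVneq u' (2 ^ h)) => hP'.
- subst u u'; rewrite eqxx orbF in hd.
  have := H 0 (ltac:(lia)) => /(congr1 (addb (Vf 0 (2 ^ h)))).
  rewrite ![Vf 0 _ (+) (_ (+) _)]addbC !addbK => E.
  by rewrite E eqxx in hd.
- subst u; case: (eqVneq hf hf') => hff.
  + subst hf'; by case: (V_half hf hu' hP') => A _; apply: A.
  + have hf'E : hf' = ~~ hf by move: hff; case: (hf); case: (hf').
    subst hf'; by case: (V_half hf hu' hP') => _ A; apply: A.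
- subst u'; case: (eqVneq hf hf') => hff.
  + subst hf'; case: (V_half hf hu hP) => A _; apply: A => x hx; by rewrite H.
  + have hf'E : hf = ~~ hf' by move: hff; case: (hf); case: (hf').
    subst hf; case: (V_half hf' hu hP) => _ A; apply: A => x hx.
    by rewrite H // addNb negbK.
- have [he hk] := ek_bounds hu; have [he' hk'] := ek_bounds hu'.
  case: (eqVneq hf hf') => hff.
  + subst hf'; rewrite eqxx /= in hd.
    have [E1 E2] := D1 he he' hk hk' (fun x hx => ltac:(
      have := H x hx; rewrite !V_reg // => /(congr1 (addb hf)); by rewrite !addKb)).
    have : gw u = gw u' by rewrite (divn_eq (gw u) (2 ^ h)) E1 E2 -divn_eq.
    move/(gw_inj hP hP') => E; by rewrite E eqxx in hd.
  + have [x [hx heq]] := D2 (gw u %% 2 ^ h) (gw u' %% 2 ^ h) he he'.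
    have := H x hx; rewrite !V_reg // (eqP heq) => /(congr1 (addb (Mv x (gw u' %/ 2 ^ h) (gw u' %% 2 ^ h)))).
    rewrite ![Mv _ _ _ (+) (_ (+) _)]addbC !addbK => E.
    by rewrite E eqxx in hff.
Qed.

Lemma code_distinct i j : i != j -> i < j + 2 * LL -> j < i + 2 * LL ->
  ~ (forall x, x < c -> bb x i = bb x j).
Proof.
move=> hij h1 h2 H.
have L0 : 0 < LL by rewrite /LL addn1.
have hui : i %% LL < LL by rewrite ltn_pmod.
have huj : j %% LL < LL by rewrite ltn_pmod.
apply: (@V_distinct (odd (i %/ LL)) (odd (j %/ LL)) (i %% LL) (j %% LL) hui huj).
  rewrite -negb_and; apply/negP => /andP [/eqP ho /eqP hu].
  move: hij h1 h2; rewrite (divn_eq i LL) (divn_eq j LL) hu.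
  set qi := i %/ LL; set qj := j %/ LL; set r := j %% LL.
  move: ho; rewrite -/qi -/qj => ho.
  case: (ltngtP qi qj) => hq.
  - have hq2 : qi.+2 <= qj.
      case: (eqVneq qj qi.+1) => [E|E]; last lia.
      by rewrite E /= in ho; case: (odd qi) ho.
    have : qi.+2 * LL <= qj * LL by rewrite leq_mul2r hq2 orbT.
    rewrite !mulSn; lia.
  - have hq2 : qj.+2 <= qi.
      case: (eqVneq qi qj.+1) => [E|E]; last lia.
      by rewrite E /= in ho; case: (odd qj) ho.
    have : qj.+2 * LL <= qi * LL by rewrite leq_mul2r hq2 orbT.
    rewrite !mulSn; lia.
  - by rewrite hq eqxx.
move=> x hx; have := H x hx.
by rewrite {1}(divn_eq i LL) {1}(divn_eq j LL) !bb_dec.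
Qed.

End Constr.

Lemma sqgt_strict eta T : T \in eta -> 0 < T -> sqgt eta T.-1 < sqgt eta T.
Proof.
case: T => [//|T1] hT _ /=; rewrite /sqgt.
elim: eta hT => [//|a s IH]; rewrite in_cons /= => /orP [/eqP <-|hs].
- rewrite ltnn leqnn add0n add1n ltnS.
  by apply: sub_count => e /=; lia.
- have := IH hs; case: (leqP a T1) => ha.
  + by rewrite (leqW ha) /= ltn_add2l.
  + by rewrite add0n => H; apply: (leq_trans H); rewrite leq_addl.
Qed.

Lemma sum_window (F : nat -> bool) i L n : i + L <= n ->
  \sum_(k < n) nat_of_bool (F k) * nat_of_bool ((i <= k) && (k < i + L)) =
  \sum_(i <= k < i + L) F k.
Proof.
move=> hn.
rewrite -(big_mkord xpredT (fun k => nat_of_bool (F k) * nat_of_bool ((i <= k) && (k < i + L)))).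
rewrite (big_cat_nat (leq0n i) (leq_trans (leq_addr L i) hn)).
rewrite (big_cat_nat (leq_addr L i) hn).
rewrite (@sum_nat0 0 i); last by move=> k /andP [_ hk]; rewrite leqNgt hk /= muln0.
rewrite (@sum_nat0 (i + L) n); last by move=> k /andP [hk _]; rewrite (_ : k < i + L = false) ?andbF ?muln0 //; lia.
rewrite /= add0n addn0.
apply: eq_big_nat => k /andP [hk1 hk2]; by rewrite hk1 hk2 muln1.
Qed.

Theorem mainTheorem7 (c h n : nat) :
  2 * (h + 1) < c ->
  c * 2 ^ h + 1 <= n ->
  exists R : 'M[bool]_(c, n),
    forall (eta : seq nat) (eta_s : nat),
      2 * eta_s = 2 ^ h + 4 ->          (* eta_s = 2^(h-1) + 2 *)
      thresholds eta eta_s ->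
      forall i j : nat,
        i <= n - (c * 2 ^ h + 1) ->
        j <= n - (c * 2 ^ h + 1) ->
        i != j ->
        i < j + 2 * (c * 2 ^ h + 1) ->
        j < i + 2 * (c * 2 ^ h + 1) ->
        sqgt_vec eta (mxvec_nat R (burst n (c * 2 ^ h + 1) i))
        <> sqgt_vec eta (mxvec_nat R (burst n (c * 2 ^ h + 1) j)).
Proof.
move=> hc hn.
case: (posnP h) => [h0|h0].
  exists (\matrix_(r < c, k < n) false)%R => eta eta_s heta.
  by move: heta; rewrite h0 expn0; lia.
exists (\matrix_(r < c, k < n) ss c h r k)%R.
move=> eta eta_s heta [hne hpos hsort hlast] i j hi hj hij h1 h2 E.
have hP : 2 ^ h = 2 * 2 ^ h.-1 by rewrite -expnS prednK.
have etaE : eta_s = 2 ^ h.-1 + 2 by lia.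
have hT : eta_s \in eta.
  by move: hne hlast; case: (eta) => [//|a s] _ <-; apply: mem_last.
have key : forall x (hx : x < c) k, k <= n - (c * 2 ^ h + 1) ->
    mxvec_nat (\matrix_(r < c, k < n) ss c h r k)%R (burst n (c * 2 ^ h + 1) k) (Ordinal hx)
    = 2 ^ h.-1 + 1 + bb c h x k.
  move=> x hx k hk; rewrite /mxvec_nat /burst.
  rewrite (eq_bigr (fun q : 'I_n => nat_of_bool (ss c h x q) *
             nat_of_bool ((k <= q) && (q < k + (c * 2 ^ h + 1))))); last first.
    by move=> q _; rewrite mxE.
  rewrite (@sum_window (ss c h x) k (c * 2 ^ h + 1) n); last lia.
  exact: (fsum_val h0 hc k hx).
apply: (code_distinct h0 hc hij h1 h2) => x hx.
have := congr1 (fun f : {ffun 'I_c -> nat} => f (Ordinal hx)) E; rewrite !ffunE !key //.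
have Hst := sqgt_strict hT (ltac:(lia)).
have E1 : (2 ^ h.-1 + 2).-1 = 2 ^ h.-1 + 1 + 0 by rewrite addn2 addn1 addn0.
rewrite etaE E1 (_ : 2 ^ h.-1 + 2 = 2 ^ h.-1 + 1 + 1) in Hst; last by rewrite -addnA.
move=> Hs; apply/eqP; move: Hs.
case: (bb c h x i); case: (bb c h x j) => //= Hs; exfalso.
- by rewrite Hs ltnn in Hst.
- by rewrite Hs ltnn in Hst.
Qed.
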